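(* Let $V=\mathbb{R}^r$, let $\mathcal{A}$ be a simplicial arrangement in $V$, let $K=\langle\alpha^\vee_1,\ldots,\alpha^\vee_r\rangle_{>0}$ be a chamber (with $\alpha^\vee_1,\ldots,\alpha^\vee_r$ a basis of $V$), and let $\tilde K$ be the chamber with $\overline{K}\cap\overline{\tilde K}=\langle\alpha^\vee_2,\ldots,\alpha^\vee_r\rangle_{\ge 0}$. Let $\beta^\vee\in V$ be the unique vector such that $\tilde K=\langle\beta^\vee,\alpha^\vee_2,\ldots,\alpha^\vee_r\rangle_{>0}$ and $|B\cap(-\tilde B)|=1$, where $B=\{\alpha_1,\ldots,\alpha_r\}$ is the dual basis of $\{\alpha^\vee_1,\ldots,\alpha^\vee_r\}$ and $\tilde B=\{\beta_1,\ldots,\beta_r\}$ is the dual basis of $\{\beta^\vee,\alpha^\vee_2,\ldots,\alpha^\vee_r\}$ (indexed so that $\beta_1$ is dual to $\beta^\vee$ and $\beta_j$ to $\alpha_j^\vee$ for $j>1$). Write $\beta^\vee=\sum_{i=1}^r\mu_i\alpha^\vee_i$ with $\mu_i\in\mathbb{R}$. Then the linear map $\sigma:V^*\to V^*$, $\alpha_i\mapsto\beta_i$ ($i=1,\ldots,r$), is a reflection, and its matrix with respect to $B$ (the $j$-th column being the coordinate vector of $\sigma(\alpha_j)$) is \[\begin{pmatrix}-1&\mu_2&\cdots&\mu_r\\0&1&&0\\\vdots&&\ddots&\\0&0&&1\end{pmatrix}.\]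
   Context: A hyperplane arrangement in $V$ is a finite set of linear hyperplanes; its chambers are the connected components of the complement of their union. It is simplicial if every chamber equals $\langle v_1,\ldots,v_r\rangle_{>0}=\{\sum a_iv_i\mid a_i>0\}$ for some basis $v_1,\ldots,v_r$ of $V$; $\langle\cdots\rangle_{\ge0}$ denotes the closed cone of nonnegative combinations. A reflection on a vector space $W$ is an element $\sigma\in\mathrm{GL}(W)$, $\sigma\ne\mathrm{id}$, of finite order which fixes some hyperplane of $W$ pointwise. *)

(* Defs.v *)
From HB Require Import structures.
From mathcomp Require Import all_boot all_order all_algebra.
From mathcomp Require Import all_classical all_reals all_analysis.
Set Implicit Arguments. Unset Strict Implicit. Unset Printing Implicit Defensive.
Import Order.TTheory GRing.Theory Num.Theory numFieldNormedType.Exports.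
Local Open Scope ring_scope.
Local Open Scope classical_set_scope.

(* V = R^r is modelled as row vectors 'rV[R]_r (with its standard topology);
   the dual space V^* is modelled as column vectors 'cV[R]_r, a functional
   f acting by x |-> x *m f. *)

Definition is_hyperplane (R : realType) (r : nat) (H : set 'rV[R]_r) : Prop :=
  exists a : 'cV[R]_r, a != 0 /\ H = [set x | x *m a = 0].

Definition is_arrangement (R : realType) (r : nat) (A : set (set 'rV[R]_r)) : Prop :=
  finite_set A /\ (forall H, A H -> is_hyperplane H).

Definition arr_complement (R : realType) (r : nat) (A : set (set 'rV[R]_r))
  : set 'rV[R]_r := ~` (\bigcup_(H in A) H).

Definition is_chamber (R : realType) (r : nat) (A : set (set 'rV[R]_r))
  (C : set 'rV[R]_r) : Prop :=
  exists2 x, arr_complement A x & C = connected_component (arr_complement A) x.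

Definition open_cone (R : realType) (r : nat) (I : finType) (v : I -> 'rV[R]_r)
  : set 'rV[R]_r :=
  [set x | exists a : I -> R, (forall i, 0 < a i) /\ x = \sum_i a i *: v i].
Definition closed_cone (R : realType) (r : nat) (I : finType) (v : I -> 'rV[R]_r)
  : set 'rV[R]_r :=
  [set x | exists a : I -> R, (forall i, 0 <= a i) /\ x = \sum_i a i *: v i].

Definition is_basis (R : realType) (r : nat) (v : 'I_r -> 'rV[R]_r) : Prop :=
  row_free (\matrix_(i < r) v i).

Definition simplicial (R : realType) (r : nat) (A : set (set 'rV[R]_r)) : Prop :=
  forall C, is_chamber A C ->
    exists2 v : 'I_r -> 'rV[R]_r, is_basis v & C = open_cone v.

Definition is_dual_basis (R : realType) (r : nat) (v : 'I_r -> 'rV[R]_r)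
  (f : 'I_r -> 'cV[R]_r) : Prop :=
  forall i j, v i *m f j = (i == j)%:R%:M.

Definition repl0 (R : realType) (n : nat) (b : 'rV[R]_n.+1)
  (v : 'I_n.+1 -> 'rV[R]_n.+1) : 'I_n.+1 -> 'rV[R]_n.+1 :=
  fun i => if i == ord0 then b else v i.

Definition tail_fam (R : realType) (n : nat) (v : 'I_n.+1 -> 'rV[R]_n.+1)
  : 'I_n -> 'rV[R]_n.+1 := fun j => v (lift ord0 j).

Definition is_reflection (R : realType) (n : nat) (S : 'M[R]_n.+1) : Prop :=
  [/\ S \in unitmx, S != 1%:M, (exists2 k : nat, (0 < k)%N & S ^+ k = 1)
    & exists2 u : 'rV[R]_n.+1, u != 0 & forall f : 'cV[R]_n.+1, u *m f = 0 -> S *m f = f].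

Definition cor_matrix (R : realType) (n : nat) (mu : 'I_n.+1 -> R) : 'M[R]_n.+1 :=
  \matrix_(i, j) (if i == ord0 then (if j == ord0 then -1 else mu j)
                  else (i == j)%:R).

(* Main.v *)
Require Import Defs.
From HB Require Import structures.
From mathcomp Require Import all_boot all_order all_algebra.
From mathcomp Require Import all_classical all_reals all_analysis.
From mathcomp Require Import ring lra.
Import Order.TTheory GRing.Theory Num.Theory numFieldNormedType.Exports.
Local Open Scope ring_scope.
Local Open Scope classical_set_scope.

Set Implicit Arguments.
Section H.
Variable R : realType.
Variable n : nat.

Lemma sum_pick (a : 'I_n.+1 -> R) l : \sum_i a i * (l == i)%:R = a l.
Proof.
rewrite (bigD1 l) //= eqxx mulr1 big1 ?addr0 // => i hi.
by rewrite eq_sym (negbTE hi) mulr0.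
Qed.

Lemma sum_pick' (a : 'I_n.+1 -> R) l : \sum_i a i * (i == l)%:R = a l.
Proof.
rewrite (bigD1 l) //= eqxx mulr1 big1 ?addr0 // => i hi.
by rewrite (negbTE hi) mulr0.
Qed.

Lemma inj_basis (alpha : 'I_n.+1 -> 'rV[R]_n.+1) (x y : 'cV[R]_n.+1) :
  is_basis alpha -> (forall k, (alpha k *m x) 0 0 = (alpha k *m y) 0 0) -> x = y.
Proof.
move=> hb H.
have hu : (\matrix_(i < n.+1) alpha i) \in unitmx by rewrite -row_free_unit.
suff: (\matrix_(i < n.+1) alpha i) *m x = (\matrix_(i < n.+1) alpha i) *m y.
  by move/(congr1 (mulmx (invmx (\matrix_(i < n.+1) alpha i)))); rewrite !mulKmx.
apply/matrixP => k j; rewrite (ord1 j).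
move: (H k); rewrite !mxE => e.
idtac.
under eq_bigr do rewrite mxE.
under [RHS]eq_bigr do rewrite mxE.
exact: e.
Qed.

Lemma mx_ext (X Y : 'M[R]_n.+1) : (forall f : 'cV[R]_n.+1, X *m f = Y *m f) -> X = Y.
Proof.
move=> H; apply/matrixP => i j.
have e := H (col j 1%:M); have := congr1 (fun M : 'cV[R]_n.+1 => M i 0) e; rewrite !mxE /=.
under eq_bigr do rewrite !mxE.
under [X in _ = X -> _]eq_bigr do rewrite !mxE.
by rewrite !sum_pick'.
Qed.

Lemma sc_sumv (I : finType) (a : I -> R) (v : I -> 'rV[R]_n.+1) (f : 'cV[R]_n.+1) :
  ((\sum_i a i *: v i) *m f) 0 0 = \sum_i a i * (v i *m f) 0 0.
Proof. rewrite mulmx_suml summxE; apply eq_bigr => i _; by rewrite -scalemxAl mxE. Qed.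

Lemma sc_sumf (I : finType) (a : I -> R) (v : 'rV[R]_n.+1) (f : I -> 'cV[R]_n.+1) :
  (v *m (\sum_i a i *: f i)) 0 0 = \sum_i a i * (v *m f i) 0 0.
Proof. rewrite mulmx_sumr summxE; apply eq_bigr => i _; by rewrite -scalemxAr mxE. Qed.

Lemma dual0 (v : 'I_n.+1 -> 'rV[R]_n.+1) (f : 'I_n.+1 -> 'cV[R]_n.+1) k j :
  is_dual_basis v f -> (v k *m f j) 0 0 = (k == j)%:R.
Proof. by move=> h; rewrite h mxE eqxx mulr1n. Qed.

Lemma decomp (alpha : 'I_n.+1 -> 'rV[R]_n.+1) B (f : 'cV[R]_n.+1) :
  is_basis alpha -> is_dual_basis alpha B ->
  f = \sum_k (alpha k *m f) 0 0 *: B k.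
Proof.
move=> hb hd; apply: (inj_basis _ _ hb) => l; rewrite sc_sumf.
under eq_bigr do rewrite (dual0 _ _ hd).
by rewrite sum_pick.
Qed.

Lemma scD (v : 'rV[R]_n.+1) (M N : 'cV[R]_n.+1) :
  (v *m (M + N)) 0 0 = (v *m M) 0 0 + (v *m N) 0 0.
Proof. by rewrite mulmxDr [LHS]mxE. Qed.
Lemma scZ (v : 'rV[R]_n.+1) (a : R) (M : 'cV[R]_n.+1) :
  (v *m (a *: M)) 0 0 = a * (v *m M) 0 0.
Proof. by rewrite -scalemxAr [LHS]mxE. Qed.
Lemma scB (v w : 'rV[R]_n.+1) (M : 'cV[R]_n.+1) :
  ((v - w) *m M) 0 0 = (v *m M) 0 0 - (w *m M) 0 0.
Proof. by rewrite mulmxBl [LHS]mxE; congr (_ + _); rewrite mxE. Qed.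
Lemma corE (mu : 'I_n.+1 -> R) l i : cor_matrix mu l i =
  if l == ord0 then (if i == ord0 then -1 else mu i) else (l == i)%:R.
Proof. by rewrite /cor_matrix mxE. Qed.
End H.

Unset Implicit Arguments.

Theorem corollary2p6 (R : realType) (n : nat)
  (A : set (set 'rV[R]_n.+1))
  (alpha : 'I_n.+1 -> 'rV[R]_n.+1) (Kt : set 'rV[R]_n.+1)
  (beta : 'rV[R]_n.+1)
  (B Bt : 'I_n.+1 -> 'cV[R]_n.+1)
  (mu : 'I_n.+1 -> R) (S : 'M[R]_n.+1) :
  is_arrangement A -> simplicial A ->
  is_basis alpha -> is_chamber A (open_cone alpha) ->
  is_chamber A Kt ->
  closure (open_cone alpha) `&` closure Kt = closed_cone (tail_fam alpha) ->
  Kt = open_cone (repl0 beta alpha) ->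
  is_dual_basis alpha B ->
  is_dual_basis (repl0 beta alpha) Bt ->
  (exists! f : 'cV[R]_n.+1, (exists i, f = B i) /\ (exists j, f = - Bt j)) ->
  beta = \sum_i mu i *: alpha i ->
  (forall i, S *m B i = Bt i) ->
  is_reflection S /\
  (forall j, S *m B j = \sum_i cor_matrix mu i j *: B i).
Proof.
move=> _ _ hb _ _ _ _ hB hBt [f [[[i ->] [j hij]] _]] hbeta hS.
have hBt' k l : (repl0 beta alpha k *m Bt l) 0 0 = (k == l)%:R by exact: dual0.
have hB' k l : (alpha k *m B l) 0 0 = (k == l)%:R by exact: dual0.
have hrep k : k != ord0 -> repl0 beta alpha k = alpha k by rewrite /repl0 => /negbTE->.
have hrep0 : repl0 beta alpha ord0 = beta by rewrite /repl0 eqxx.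
have key k : k != ord0 -> (k == i)%:R = - (k == j)%:R :> R.
  move=> hk; rewrite -hB' hij mulmxN mxE -(hrep k hk) hBt'.
  done.
have i0 : i = ord0.
  apply/eqP; apply/negPn/negP => hi; have := key i hi; rewrite eqxx.
  by case: (i == j) => /=; lra.
subst i.
have j0 : j = ord0.
  apply/eqP; apply/negPn/negP => hj; have := key j hj; rewrite eqxx (negbTE hj) /=.
  lra.
subst j.
have hBt0 : Bt ord0 = - B ord0 by rewrite hij opprK.
have scB0 k : (beta *m B k) 0 0 = mu k.
  by rewrite hbeta sc_sumv; under eq_bigr do rewrite hB'; rewrite sum_pick'.
have mu0 : mu ord0 = -1.
  have := hBt' ord0 ord0; rewrite hrep0 eqxx hBt0 mulmxN mxE scB0 /=; lra.
have hal0 : alpha ord0 = - beta + \sum_(i | i != ord0) mu i *: alpha i.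
  by rewrite hbeta (bigD1 ord0) //= mu0 scaleN1r opprD opprK addrNK.
have hBtc l k : (alpha l *m Bt k) 0 0 = cor_matrix mu l k.
  rewrite /cor_matrix [in RHS]mxE; case: (eqVneq l ord0) => [->|hl]; last first.
    by rewrite -(hrep l hl) hBt'.
  rewrite hal0 mulmxDl mxE mulNmx mxE -hrep0 hBt'.
  rewrite mulmx_suml summxE.
  under eq_bigr => i hi do rewrite -scalemxAl mxE -(hrep i hi) hBt'.
  case: (eqVneq k ord0) => [->|hk].
    rewrite big1 ?addr0 // => i hi; by rewrite (negbTE hi) mulr0.
  rewrite oppr0 add0r (bigD1 k) //= eqxx mulr1 big1 ?addr0 //.
  by move=> i /andP[_ hi]; rewrite (negbTE hi) mulr0.
have hSB j : S *m B j = \sum_i cor_matrix mu i j *: B i.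
  rewrite hS; apply: (inj_basis _ _ hb) => l; rewrite sc_sumf hBtc.
  under eq_bigr do rewrite hB'.
  by rewrite sum_pick.
split=> //.
set u := beta - alpha ord0.
have hSf g : S *m g = g + (u *m g) 0 0 *: B ord0.
  rewrite {1}(decomp g hb hB) mulmx_sumr.
  under eq_bigr do rewrite -scalemxAr hS.
  apply: (inj_basis _ _ hb) => l; rewrite sc_sumf.
  under eq_bigr do rewrite hBtc.
  rewrite scD scZ hB' /u scB hbeta sc_sumv.
  case: (eqVneq l ord0) => [->|hl]; last first.
    rewrite mulr0 addr0.
    under eq_bigr => k _ do rewrite corE (negbTE hl).
    by rewrite sum_pick.
  rewrite /= mulr1.
  under eq_bigr do rewrite corE eqxx.
  rewrite (bigD1 ord0) //= [in RHS](bigD1 ord0) //= mu0.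
  under eq_bigr => k hk do rewrite (negbTE hk) mulrC.
  lra.
have hu0 : (u *m B ord0) 0 0 = -2.
  by rewrite /u scB scB0 mu0 hB' eqxx /= -opprD.
have SS : S *m S = 1%:M.
  apply: mx_ext => g; rewrite -mulmxA mul1mx (hSf (S *m g)) !(hSf g).
  rewrite scD scZ hu0 -addrA -scalerDl.
  have -> : (u *m g) 0 0 + ((u *m g) 0 0 + (u *m g) 0 0 * -2) = 0 by ring.
  by rewrite scale0r addr0.
split.
- by have [] := mulmx1_unit SS.
- apply/eqP => h1; have := hS ord0; rewrite h1 mul1mx hBt0 => e.
  have := hB' ord0 ord0; rewrite {1}e mulmxN mxE hB' eqxx /=; lra.
- by exists 2%N.
- exists u.
    apply/eqP => h0; move: hu0; rewrite h0 mul0mx mxE; lra.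
  by move=> g hg; rewrite hSf hg mxE scale0r addr0.
Qed.
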